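(* Let $S\subseteq R$ be a set of long roots such that $\alpha+\beta\notin R$ for all $\alpha,\beta\in S$ and $(\gamma+R)\cap(S+S)=\emptyset$ for all $\gamma\in R\setminus S$. For $\alpha\in S$ set $\alpha^\perp=\{\gamma\in S:(\alpha,\gamma)=0\}$. Then $\#\alpha^\perp=\#\beta^\perp$ for all $\alpha,\beta\in S$.
   Context: $R$ is the root system of a complex simple Lie algebra with the form $(\cdot,\cdot)$ induced by the Killing form. $S+S=\{\alpha+\beta:\alpha,\beta\in S\}$, $\gamma+R=\{\gamma+\delta:\delta\in R\}$. *)

(* Defs.v *)
From HB Require Import structures.
From mathcomp Require Import all_boot all_order all_algebra.
Set Implicit Arguments. Unset Strict Implicit. Unset Printing Implicit Defensive.
Import Order.TTheory GRing.Theory Num.Theory.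
Local Open Scope ring_scope.

Definition dot (R : realFieldType) (n : nat) (u v : 'rV[R]_n) : R :=
  \sum_(i < n) u 0 i * v 0 i.

Definition is_root_system (R : realFieldType) (n : nat) (Phi : seq 'rV[R]_n) : Prop :=
  [/\
      Phi != [::] /\ 0 \notin Phi,
      (* spans R^n: the only vector orthogonal to all roots is 0 *)
      (forall v : 'rV[R]_n, (forall a, a \in Phi -> dot v a = 0) -> v = 0),
      (forall a b, a \in Phi -> b \in Phi ->
         b - ((2 * dot b a) / dot a a) *: a \in Phi),
      (forall a b, a \in Phi -> b \in Phi ->
         exists z : int, 2 * dot b a = z%:~R * dot a a) &
      (forall a (c : R), a \in Phi -> c *: a \in Phi -> c = 1 \/ c = -1)].

Definition irreducible_rs (R : realFieldType) (n : nat) (Phi : seq 'rV[R]_n) : Prop :=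
  forall P : pred 'rV[R]_n,
    (forall a b, a \in Phi -> b \in Phi -> P a -> ~~ P b -> dot a b = 0) ->
    (forall a, a \in Phi -> P a) \/ (forall a, a \in Phi -> ~~ P a).

Definition simple_root_system (R : realFieldType) (n : nat) (Phi : seq 'rV[R]_n) : Prop :=
  is_root_system Phi /\ irreducible_rs Phi.

Definition long_root (R : realFieldType) (n : nat) (Phi : seq 'rV[R]_n) (a : 'rV[R]_n) : Prop :=
  a \in Phi /\ forall b, b \in Phi -> dot b b <= dot a a.

Definition perp_in (R : realFieldType) (n : nat) (S : seq 'rV[R]_n) (a : 'rV[R]_n) : seq 'rV[R]_n :=
  [seq g <- undup S | dot a g == 0].

(* Main.v *)
Require Import Defs.
From HB Require Import structures.
From mathcomp Require Import all_boot all_order all_algebra.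
From Stdlib Require Import ClassicalDescription.
Import Order.TTheory GRing.Theory Num.Theory.
Local Open Scope ring_scope.
Set Implicit Arguments. Unset Strict Implicit.

Section Dot.
Variables (R : realFieldType) (n : nat).
Implicit Types u v w : 'rV[R]_n.
Lemma dotC u v : dot u v = dot v u.
Proof. by apply: eq_bigr => i _; rewrite mulrC. Qed.
Lemma dotDl u v w : dot (u + v) w = dot u w + dot v w.
Proof. by rewrite /dot -big_split; apply: eq_bigr => i _; rewrite mxE mulrDl. Qed.
Lemma dotZl c u v : dot (c *: u) v = c * dot u v.
Proof. by rewrite /dot mulr_sumr; apply: eq_bigr => i _; rewrite mxE mulrA. Qed.
Lemma dotNl u v : dot (- u) v = - dot u v.
Proof. by rewrite -scaleN1r dotZl mulN1r. Qed.
Lemma dotBl u v w : dot (u - v) w = dot u w - dot v w.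
Proof. by rewrite dotDl dotNl. Qed.
Lemma dotDr u v w : dot w (u + v) = dot w u + dot w v.
Proof. by rewrite dotC dotDl !(dotC w). Qed.
Lemma dotZr c u v : dot v (c *: u) = c * dot v u.
Proof. by rewrite dotC dotZl dotC. Qed.
Lemma dotNr u v : dot v (- u) = - dot v u.
Proof. by rewrite dotC dotNl dotC. Qed.
Lemma dotBr u v w : dot w (u - v) = dot w u - dot w v.
Proof. by rewrite dotDr dotNr. Qed.
Lemma dot_ge0 u : 0 <= dot u u.
Proof. by apply: sumr_ge0 => i _; rewrite -expr2 sqr_ge0. Qed.
Lemma dot_eq0 u : dot u u = 0 -> u = 0.
Proof.
move=> /eqP; rewrite psumr_eq0; last by move=> i _; rewrite -expr2 sqr_ge0.
move/allP => H; apply/rowP => i; rewrite !mxE.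
by have := H i (mem_index_enum _); rewrite /= mulf_eq0 orbb => /eqP.
Qed.
End Dot.

Lemma dot2 (R : realFieldType) (x : R) : 2 * x = x + x.
Proof. by rewrite mulr_natl mulr2n. Qed.

Lemma dotBB (R : realFieldType) n (a r : 'rV[R]_n) :
  dot (a - r) (a - r) = dot a a + dot r r - 2 * dot r a.
Proof.
rewrite dotBl !dotBr (dotC a r) dot2 opprB opprD addrA.
by rewrite (addrAC _ (- _) (dot r r)) addrA.
Qed.

Lemma dot_gt0 (R : realFieldType) n (a : 'rV[R]_n) : a != 0 -> 0 < dot a a.
Proof.
move=> a0; rewrite lt_def dot_ge0 andbT; apply/eqP => /dot_eq0 H.
by rewrite H eqxx in a0.
Qed.

Lemma root_nz (R : realFieldType) n (Phi : seq 'rV[R]_n) a :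
  is_root_system Phi -> a \in Phi -> a != 0.
Proof.
case=> [[_ H0] _ _ _ _] aP; apply/eqP => a0; by rewrite -a0 aP in H0.
Qed.

Lemma key1 (R : realFieldType) n (Phi : seq 'rV[R]_n) r a :
  is_root_system Phi -> r \in Phi -> a \in Phi -> dot r r <= dot a a ->
  0 < dot r a -> r = a \/ 2 * dot r a = dot a a.
Proof.
move=> hR rP aP Hle Hpos.
have L0 : 0 < dot a a by apply: dot_gt0; exact: root_nz hR aP.
have [_ _ _ Hc _] := hR.
have [z Hz] := Hc a r aP rP.
have E := dotBB a r.
have Hge := dot_ge0 (a - r).
have z0 : 0 < z.
  by rewrite -(ltr0z R) -(pmulr_lgt0 _ L0) -Hz mulr_gt0.
have z2 : z <= 2.
  rewrite -(ler_int R) -(ler_pM2r L0) -Hz.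
  have : 2 * dot r a <= dot a a + dot r r.
    by rewrite -subr_ge0 -E.
  move/le_trans; apply; rewrite dot2 lerD2l //.
case: z z0 z2 Hz => [[|[|[|k]]]|k] //= _ _ Hz.
  by right; rewrite Hz mul1r.
left; symmetry; apply/eqP; rewrite -subr_eq0; apply/eqP/dot_eq0.
apply/le_anti; rewrite Hge andbT E Hz.
rewrite dot2 (addrC (dot a a)) opprD addrA addrK subr_le0 //.
Qed.

Definition refl (R : realFieldType) n (t v : 'rV[R]_n) :=
  v - ((2 * dot v t) / dot t t) *: t.

Lemma refl_adj (R : realFieldType) n (t x y : 'rV[R]_n) :
  dot x (refl t y) = dot (refl t x) y.
Proof.
rewrite /refl dotBr dotBl dotZr dotZl; congr (_ - _).
rewrite (dotC t y) !(mulrAC _ _^-1); congr (_ / _); rewrite -!mulrA; congr (_ * _); exact: mulrC.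
Qed.

Lemma refl_invol (R : realFieldType) n (t v : 'rV[R]_n) :
  t != 0 -> refl t (refl t v) = v.
Proof.
move=> t0; have T0 : dot t t != 0 by rewrite gt_eqF // dot_gt0.
have H1 : dot (refl t v) t = - dot v t by rewrite /refl dotBl dotZl divfK // dot2 opprD addrA subrr add0r.
by rewrite {1}/refl H1 mulrN mulNr scaleNr opprK /refl subrK.
Qed.

Lemma refl_1 (R : realFieldType) n (t v : 'rV[R]_n) :
  2 * dot v t = dot t t -> dot t t != 0 -> refl t v = v - t.
Proof. by move=> H T0; rewrite /refl H divff // scale1r. Qed.

Lemma refl_N1 (R : realFieldType) n (t v : 'rV[R]_n) :
  2 * dot v t = - dot t t -> dot t t != 0 -> refl t v = v + t.
Proof. by move=> H T0; rewrite /refl H mulNr divff // scaleN1r opprK. Qed.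

Lemma refl_0 (R : realFieldType) n (t v : 'rV[R]_n) :
  dot v t = 0 -> refl t v = v.
Proof. by move=> H; rewrite /refl H mulr0 mul0r scale0r subr0. Qed.

Lemma refl_swap (R : realFieldType) n (a b : 'rV[R]_n) :
  dot a a = dot b b -> a != b -> refl (a - b) a = b.
Proof.
move=> Hab ab.
have t0 : a - b != 0 by rewrite subr_eq0.
have T0 : dot (a - b) (a - b) != 0 by rewrite gt_eqF // dot_gt0.
apply: (etrans (refl_1 _ T0)); last by rewrite opprB addrC subrK.
rewrite dotBB dotBr -Hab dotC dot2 dot2 opprD addrA.
by rewrite (addrAC _ (- _) (dot a a)) addrA.
Qed.

Lemma negP_root (R : realFieldType) n (Phi : seq 'rV[R]_n) t :
  is_root_system Phi -> t \in Phi -> - t \in Phi.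
Proof.
move=> hR tP; have [_ _ Hr _ _] := hR.
have T0 : dot t t != 0 by rewrite gt_eqF // dot_gt0 // (root_nz hR tP).
have := Hr t t tP tP.
by rewrite mulfK // scaler_nat mulr2n opprD addrA subrr add0r.
Qed.

Lemma adj_le (R : realFieldType) n (Phi S : seq 'rV[R]_n) :
  is_root_system Phi -> (forall a, a \in S -> long_root Phi a) ->
  (forall a b, a \in S -> b \in S -> a + b \notin Phi) ->
  (forall g, g \in Phi -> g \notin S ->
     forall d a b, d \in Phi -> a \in S -> b \in S -> g + d != a + b) ->
  forall a b, a \in S -> b \in S -> 2 * dot a b = dot a a ->
  (size (perp_in S a) <= size (perp_in S b))%N.
Proof.
move=> hR hL h3 h4 a b aS bS Hab.
have [aP aM] := hL a aS; have [bP bM] := hL b bS.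
have [_ _ Hr _ _] := hR.
have Lab : dot a a = dot b b by apply/le_anti; rewrite aM ?bM.
have L0 : 0 < dot a a by apply: dot_gt0; exact: root_nz hR aP.
have ab : a != b.
  apply/eqP => E; move: Hab; rewrite E dot2 -{3}[dot b b]addr0 => /addrI H.
  by move: L0; rewrite E H ltxx.
set t := a - b.
have tP : t \in Phi.
  by have := Hr b a bP aP; rewrite -Lab Hab divff ?gt_eqF // scale1r.
have T : dot t t = dot a a by rewrite /t dotBB -Lab dotC Hab addrK.
have T0 : dot t t != 0 by rewrite T gt_eqF.
have t0 : t != 0 by apply/eqP => E; move: T0; rewrite E /dot big1 ?eqxx // => i _; rewrite mxE mul0r.
have fa : refl t a = b := refl_swap Lab ab.
have fb : refl t b = a by rewrite -fa refl_invol.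
have fS : forall g, g \in S -> refl t g \in S.
  move=> g gS; have [gP gM] := hL g gS.
  have Lg : dot g g = dot a a by apply/le_anti; rewrite aM ?gM.
  have fgP : refl t g \in Phi by exact: Hr t g tP gP.
  case: (ltgtP (dot t g) 0) => Htg.
  - have ntP := negP_root hR tP.
    have Hp : 0 < dot (- t) g by rewrite dotNl oppr_gt0.
    have [E|H] := key1 hR ntP gP (gM _ ntP) Hp.
      by move: (h3 g a gS aS); rewrite -E /t opprB subrK bP.
    have Efg : refl t g = g + t.
      apply: refl_N1 => //; rewrite T -Lg -H dotNl mulrN opprK dotC //.
    case: (boolP (refl t g \in S)) => // nS.
    by have := h4 _ fgP nS b g a bP gS aS; rewrite Efg -addrA subrK eqxx.
  - have [E|H] := key1 hR tP gP (gM _ tP) Htg.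
      by move: (h3 g b gS bS); rewrite -E /t subrK aP.
    have Efg : refl t g = g - t.
      apply: refl_1 => //; rewrite T -Lg -H dotC //.
    case: (boolP (refl t g \in S)) => // nS.
    by have := h4 _ fgP nS a g b aP gS bS; rewrite Efg /t opprB -addrA subrK eqxx.
  - by rewrite refl_0 // dotC.
have finj : injective (refl t) := can_inj (fun v => refl_invol v t0).
rewrite -(size_map (refl t)); apply: uniq_leq_size.
  by rewrite map_inj_uniq // filter_uniq // undup_uniq.
move=> x /mapP [g]; rewrite mem_filter mem_undup => /andP [ag gS] ->.
by rewrite mem_filter mem_undup fS // andbT refl_adj fb.
Qed.

Lemma adj_eq (R : realFieldType) n (Phi S : seq 'rV[R]_n) :
  is_root_system Phi -> (forall a, a \in S -> long_root Phi a) ->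
  (forall a b, a \in S -> b \in S -> a + b \notin Phi) ->
  (forall g, g \in Phi -> g \notin S ->
     forall d a b, d \in Phi -> a \in S -> b \in S -> g + d != a + b) ->
  forall a b, a \in S -> b \in S -> dot a b != 0 ->
  size (perp_in S a) = size (perp_in S b).
Proof.
move=> hR hL h3 h4 a b aS bS Hab.
have [aP aM] := hL a aS; have [bP bM] := hL b bS.
have [_ _ Hr _ _] := hR.
have Lab : dot a a = dot b b by apply/le_anti; rewrite aM ?bM.
have L0 : 0 < dot a a by apply: dot_gt0; exact: root_nz hR aP.
case: (ltgtP (dot b a) 0) => H.
- have nbP := negP_root hR bP.
  have Hp : 0 < dot (- b) a by rewrite dotNl oppr_gt0.
  have [E|H2] := key1 hR nbP aP (aM _ nbP) Hp.
    rewrite -E /perp_in; congr size; apply: eq_filter => g.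
    by rewrite dotNl oppr_eq0.
  have : refl a b \in Phi := Hr a b aP bP.
  rewrite refl_N1 ?gt_eqF //.
    by rewrite addrC (negbTE (h3 a b aS bS)).
  by rewrite -H2 dotNl mulrN opprK.
- have [E|H2] := key1 hR bP aP (aM _ bP) H; first by rewrite E.
  apply/eqP; rewrite eqn_leq; apply/andP; split.
    by apply: (adj_le hR hL h3 h4) => //; rewrite dotC.
  by apply: (adj_le hR hL h3 h4) => //; rewrite -Lab.
- by move: Hab; rewrite dotC H eqxx.
Qed.

Definition erel (R : realFieldType) n : rel 'rV[R]_n := fun x y => dot x y != 0.

Lemma shorten (R : realFieldType) n (Phi : seq 'rV[R]_n) :
  is_root_system Phi ->
  forall l a, a \in Phi -> all (fun x => x \in Phi) l -> path (@erel R n) a l ->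
  l != [::] -> exists r, [/\ r \in Phi, dot a r != 0 & dot r (last a l) != 0].
Proof.
move=> hR l; have [_ _ Hr _ _] := hR.
move: {2}(size l) (leqnn (size l)) => k; elim: k l => [|k IH] l.
  by case: l.
case: l => [|x [|y [|z l]]] //=.
- move=> _ a aP /andP [xP _] /andP [ax _] _; exists a; split => //.
  by rewrite gt_eqF // dot_gt0 // (root_nz hR aP).
- move=> _ a aP /and3P [xP yP _] /and3P [ax xy _] _; exists x; split => //.
rewrite !ltnS => Hk a aP /and4P [xP yP zP lP] /and4P [ax xy yz zl] _.
case: (boolP (dot a y != 0)) => ay.
  have := IH (y :: z :: l) _ a aP; rewrite /= /erel yP zP lP ay; rewrite /erel in yz zl; rewrite yz zl.
  by apply => //; exact: ltnW.
case: (boolP (dot x z != 0)) => xz.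
  have := IH (x :: z :: l) _ a aP; rewrite /= /erel xP zP lP xz; rewrite /erel in ax zl; rewrite ax zl.
  by apply => //; exact: ltnW.
move: ay xz; rewrite !negbK => /eqP ay /eqP xz.
have x0 : dot x x != 0 by rewrite gt_eqF // dot_gt0 // (root_nz hR xP).
have y'P : refl x y \in Phi := Hr x y xP yP.
have := IH (refl x y :: z :: l) _ a aP; rewrite /= y'P zP lP zl.
apply => //; rewrite andbT; rewrite /erel in ax xy yz *; apply/andP; split.
  rewrite /refl dotBr dotZr ay add0r oppr_eq0 !mulf_neq0 ?invr_neq0 //.
    by rewrite pnatr_eq0.
  by rewrite dotC.
by rewrite /refl dotBl dotZl xz mulr0 subr0.
Qed.

Lemma reach (R : realFieldType) n (Phi : seq 'rV[R]_n) :
  simple_root_system Phi -> forall a b, a \in Phi -> b \in Phi ->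
  exists l, [&& all (fun x => x \in Phi) l, path (@erel R n) a l & last a l == b].
Proof.
move=> [hR hI] a b aP bP.
pose Q v := exists l, [&& all (fun x => x \in Phi) l, path (@erel R n) a l & last a l == v].
pose P : pred 'rV[R]_n := fun v => if excluded_middle_informative (Q v) then true else false.
have HP : forall v, P v -> Q v.
  by move=> v; rewrite /P; case: excluded_middle_informative.
have PH : forall v, Q v -> P v.
  by move=> v; rewrite /P; case: excluded_middle_informative.
have HI : (forall v, v \in Phi -> P v) \/ (forall v, v \in Phi -> ~~ P v).
  apply: hI => x y xP yP /HP [l /and3P [lP pl /eqP xl]] Py.
  apply/eqP; apply/negPn/negP => xy; move/negP: Py; apply; apply: PH.
  exists (rcons l y); rewrite all_rcons rcons_path last_rcons xl yP lP pl eqxx.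
  by rewrite /= /erel xy.
case: HI => H.
  exact: HP (H b bP).
by have := H a aP; rewrite PH //; exists [::]; rewrite /= eqxx.
Qed.

Lemma orth (R : realFieldType) n (Phi S : seq 'rV[R]_n) :
  simple_root_system Phi -> (forall a, a \in S -> long_root Phi a) ->
  (forall a b, a \in S -> b \in S -> a + b \notin Phi) ->
  (forall g, g \in Phi -> g \notin S ->
     forall d a b, d \in Phi -> a \in S -> b \in S -> g + d != a + b) ->
  forall a b, a \in S -> b \in S -> dot a b = 0 ->
  exists c, [/\ c \in S, dot a c != 0 & dot c b != 0].
Proof.
move=> hS hL h3 h4 a b aS bS ab0; have hR := hS.1.
have [aP aM] := hL a aS; have [bP bM] := hL b bS.
have [_ _ Hr _ _] := hR.
have Lab : dot a a = dot b b by apply/le_anti; rewrite aM ?bM.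
have L0 : 0 < dot a a by apply: dot_gt0; exact: root_nz hR aP.
have [l /and3P[lP pl /eqP lb]] := reach hS aP bP.
have ln : l != [::].
  by move: lb lP pl; case: l => //= E; move: L0; rewrite {2}E ab0 ltxx.
have [r0 [r0P ar0 r0b]] := shorten hR aP lP pl ln.
rewrite lb in r0b.
have [r1 [r1P r1a r1b]] : exists r1, [/\ r1 \in Phi, 0 < dot r1 a & dot r1 b != 0].
  case: (ltgtP (dot r0 a) 0) => H.
  - by exists (- r0); rewrite negP_root // !dotNl oppr_gt0 H oppr_eq0.
  - by exists r0.
  - by move: ar0; rewrite dotC H eqxx.
have [r [rP ra rb]] : exists r, [/\ r \in Phi, 0 < dot r a & 0 < dot r b].
  case: (ltgtP (dot r1 b) 0) => H.
  - exists (refl b r1); split; first exact: Hr b r1 bP r1P.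
      by rewrite /refl dotBl dotZl (dotC b a) ab0 mulr0 subr0.
    by rewrite /refl dotBl dotZl divfK ?gt_eqF -?Lab // dot2 opprD addrA subrr add0r oppr_gt0.
  - by exists r1.
  - by move: r1b; rewrite H eqxx.
have [E|Ha] := key1 hR rP aP (aM _ rP) ra.
  by move: rb; rewrite E ab0 ltxx.
have [E|Hb] := key1 hR rP bP (bM _ rP) rb.
  by move: ra; rewrite E dotC ab0 ltxx.
case: (boolP (r \in S)) => rS.
  by exists r; split => //; rewrite ?(dotC a) gt_eqF.
exfalso.
have N0 : 0 < dot r r by apply: dot_gt0; exact: root_nz hR rP.
set k := 2 * dot a r / dot r r.
have kN : k * dot r r = dot a a by rewrite divfK ?gt_eqF // dotC Ha.
have k0 : 0 < k.
  have -> : k = dot a a / dot r r by rewrite -kN mulfK ?gt_eqF.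
  by rewrite divr_gt0.
set t := refl r a.
have tP : t \in Phi := Hr r a rP aP.
have tt : dot t t = dot a a.
  by rewrite /t /refl -/k dotBB dotZl dotZr dotZl kN mulrCA Ha addrK.
have ntP := negP_root hR tP.
have ntb : dot (- t) b = k * dot r b.
  by rewrite dotNl /t /refl -/k dotBl dotZl ab0 sub0r opprK.
have Hp : 0 < dot (- t) b by rewrite ntb mulr_gt0.
have rb0 : dot r b != 0 by rewrite gt_eqF.
have [E|H] := key1 hR ntP bP (bM _ ntP) Hp.
- have k2 : k = 2.
    apply: (mulIf rb0); rewrite -ntb E -Hb //.
  have := h4 r rP rS r a b rP aS bS.
  by rewrite -E /t /refl -/k k2 opprB (addrC a) subrK scaler_nat mulr2n eqxx.
- have k1 : k = 1.
    apply: (mulIf rb0); rewrite mul1r -ntb.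
    apply: (mulfI (x := 2)); first by rewrite pnatr_eq0.
    by rewrite H Hb.
  have Et : t = a - r by rewrite /t /refl -/k k1 scale1r.
  have eP : refl t b \in Phi := Hr t b tP bP.
  have T0 : dot t t != 0 by rewrite tt gt_eqF.
  rewrite (refl_N1 _ T0) in eP; last first.
    by rewrite tt Lab -Hb Et dotBr (dotC b a) ab0 sub0r mulrN dotC.
  have := h4 r rP rS _ a b eP aS bS.
  by rewrite Et addrC -addrA subrK addrC eqxx.
Qed.

Theorem mainTheorem17 (R : realFieldType) (n : nat) (Phi S : seq 'rV[R]_n) :
  simple_root_system Phi ->
  (forall a, a \in S -> long_root Phi a) ->
  (forall a b, a \in S -> b \in S -> a + b \notin Phi) ->
  (forall g, g \in Phi -> g \notin S ->
     forall d a b, d \in Phi -> a \in S -> b \in S -> g + d != a + b) ->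
  forall a b, a \in S -> b \in S -> size (perp_in S a) = size (perp_in S b).
Proof.
move=> hS hL h3 h4 a b aS bS; have hR := hS.1.
case: (boolP (dot a b == 0)) => [/eqP ab|ab]; last exact: (adj_eq hR hL h3 h4).
have [c [cS ac cb]] := orth hS hL h3 h4 aS bS ab.
by rewrite (adj_eq hR hL h3 h4 aS cS ac) (adj_eq hR hL h3 h4 cS bS cb).
Qed.
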